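(* Let $1<p<\infty$. Every interval preserving operator $T$ on $\ell^p$ (with the coordinatewise order) has a non-trivial closed invariant subspace which is an ideal.
   Context: On $\ell^p$, $x\ge0$ means all coordinates are real and nonnegative; order intervals are $[0,x]=\{y:0\le y\le x\}$. A positive operator $T$ is interval preserving if $T[0,x]=[0,Tx]$ for every $x\ge0$. An ideal is a linear subspace $M$ such that $|x|\le|y|$ coordinatewise and $y\in M$ imply $x\in M$. Non-trivial means different from $\{0\}$ and $\ell^p$. *)

(* Defs.v *)
From HB Require Import structures.
From mathcomp Require Import all_boot all_order all_algebra.
From mathcomp Require Import all_classical all_reals all_analysis.
Set Implicit Arguments. Unset Strict Implicit. Unset Printing Implicit Defensive.
Import Order.TTheory GRing.Theory Num.Theory.
Import numFieldNormedType.Exports.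
Local Open Scope ring_scope.
Local Open Scope classical_set_scope.

Section Lp.
Variable R : realType.

Definition rseq := nat -> R.

Definition in_lp (p : R) (x : rseq) : Prop :=
  cvgn (series (fun n => `|x n| `^ p)).

Definition lp_norm (p : R) (x : rseq) : R :=
  (limn (series (fun n => `|x n| `^ p))) `^ p^-1.

Definition seq_nonneg (x : rseq) : Prop := forall n, 0 <= x n.
Definition seq_le (x y : rseq) : Prop := forall n, x n <= y n.

Definition order_interval (x : rseq) : set rseq :=
  [set y | seq_nonneg y /\ seq_le y x].

Definition lp_operator (p : R) (T : rseq -> rseq) : Prop :=
  [/\ (forall x, in_lp p x -> in_lp p (T x)),
      (forall (a : R) x y, in_lp p x -> in_lp p y ->
          T (fun n => a * x n + y n) = (fun n => a * T x n + T y n)) &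
      exists C : R, forall x, in_lp p x -> lp_norm p (T x) <= C * lp_norm p x].

Definition positive_op (p : R) (T : rseq -> rseq) : Prop :=
  forall x, in_lp p x -> seq_nonneg x -> seq_nonneg (T x).

Definition interval_preserving (p : R) (T : rseq -> rseq) : Prop :=
  forall x, in_lp p x -> seq_nonneg x ->
    T @` order_interval x = order_interval (T x).

Definition lp_subspace (p : R) (M : set rseq) : Prop :=
  [/\ M `<=` in_lp p, M (fun _ => 0) &
      forall (a : R) x y, M x -> M y -> M (fun n => a * x n + y n)].

Definition lp_ideal (p : R) (M : set rseq) : Prop :=
  lp_subspace p M /\
  forall x y, (forall n, `|x n| <= `|y n|) -> M y -> M x.

Definition lp_closed (p : R) (M : set rseq) : Prop :=
  forall (u : nat -> rseq) (x : rseq), (forall k, M (u k)) -> in_lp p x ->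
    (fun k => lp_norm p (fun n => u k n - x n)) @ \oo --> (0 : R) -> M x.

Definition T_invariant (T : rseq -> rseq) (M : set rseq) : Prop :=
  forall x, M x -> M (T x).

Definition lp_nontrivial (p : R) (M : set rseq) : Prop :=
  (exists x, M x /\ x <> (fun _ => 0)) /\ (exists x, in_lp p x /\ ~ M x).

End Lp.

(* Main.v *)
Require Import Defs.
From HB Require Import structures.
From mathcomp Require Import all_boot all_order all_algebra.
From mathcomp Require Import all_classical all_reals all_analysis.
From mathcomp Require Import lra.
Import Order.TTheory GRing.Theory Num.Theory.
Import numFieldNormedType.Exports.
Set Implicit Arguments. Unset Strict Implicit.
Local Open Scope ring_scope.
Local Open Scope classical_set_scope.

Definition ee (R : realType) (n : nat) : rseq R := fun k => (k == n)%:R.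

Lemma in_lp_e (R : realType) (p : R) n : 0 < p -> in_lp p (ee R n).
Proof.
move=> p0; rewrite /in_lp.
have -> : (fun k => `|ee R n k| `^ p) = ee R n.
  apply/funext => k; rewrite /ee; case: (k == n).
    by rewrite normr1 powR1.
  by rewrite normr0 powR0 // gt_eqF.
have E : forall k, series (ee R n) k = (n < k)%:R.
  elim=> [|k IH]; first by rewrite /series /= big_geq.
  rewrite seriesSr IH /ee; case: ltngtP => [nk|kn|->].
  - by rewrite addr0 ltnS ltnW.
  - by rewrite addr0 ltnS leqNgt kn.
  - by rewrite add0r ltnSn.
apply/cvg_ex; exists (1:R); apply: cvg_near_cst; near=> k.
rewrite E; suff -> : (n < k)%N by [].
by near: k; exact: nbhs_infty_gt.
Unshelve. all: by end_near. Qed.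

Lemma in_lp_dom (R : realType) (p : R) (x y : rseq R) : 0 <= p ->
  (forall n, `|x n| <= `|y n|) -> in_lp p y -> in_lp p x.
Proof.
move=> p0 xy; apply: series_le_cvg => n; rewrite ?powR_ge0 //.
by apply: ge0_ler_powR; rewrite ?nnegrE.
Qed.

Lemma powR_add_le (R : realType) (p : R) (u v : R) : 0 <= p -> 0 <= u -> 0 <= v ->
  (u + v) `^ p <= 2 `^ p * (u `^ p + v `^ p).
Proof.
move=> p0 u0 v0.
wlog uv : u v u0 v0 / u <= v.
  move=> H; case: (leP u v) => [|/ltW vu]; first exact: H.
  by rewrite addrC [u `^ p + _]addrC; apply: H.
apply: (@le_trans _ _ ((2 * v) `^ p)).
  by apply: ge0_ler_powR; rewrite ?nnegrE ?addr_ge0 ?mulr_ge0 // mulr2n mulrDl mul1r lerD2r.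
rewrite powRM // ler_wpM2l ?powR_ge0 // lerDr powR_ge0 //.
Qed.

Lemma in_lp_comb (R : realType) (p : R) (a : R) (x y : rseq R) : 0 <= p ->
  in_lp p x -> in_lp p y -> in_lp p (fun n => a * x n + y n).
Proof.
move=> p0 hx hy.
apply: (@series_le_cvg _ _ ((2 `^ p) *: ((`|a| `^ p) *: (fun n => `|x n| `^ p) + (fun n => `|y n| `^ p)))).
- by move=> n; rewrite powR_ge0.
- move=> n; rewrite !fctE /= mulr_ge0 ?addr_ge0 ?mulr_ge0 ?powR_ge0 //.
- move=> n; rewrite !fctE /=.
  apply: (@le_trans _ _ ((`|a * x n| + `|y n|) `^ p)).
    by apply: ge0_ler_powR; rewrite ?nnegrE ?addr_ge0 // ler_normD.
  rewrite /GRing.scale /= -powRM // -normrM; exact: powR_add_le.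
- apply: (@is_cvg_seriesZ R _ (2 `^ p)); apply: is_cvg_seriesD => //.
  exact: (@is_cvg_seriesZ R _ (`|a| `^ p)).
Qed.

Lemma series_nd (R : realType) (u : R ^nat) : (forall n, 0 <= u n) ->
  nondecreasing_seq (series u).
Proof. by move=> u0; apply/nondecreasing_seqP => n; rewrite seriesSr lerDl. Qed.

Lemma lp_norm_ge0 (R : realType) (p : R) x : 0 <= lp_norm p x.
Proof. exact: powR_ge0. Qed.

Lemma powR_inv (R : realType) (p a : R) : 0 < p -> 0 <= a -> (a `^ p) `^ p^-1 = a.
Proof. by move=> p0 a0; rewrite -powRrM divff ?gt_eqF // powRr1. Qed.

Lemma coord_le (R : realType) (p : R) (y : rseq R) m : 0 < p -> in_lp p y ->
  `|y m| <= lp_norm p y.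
Proof.
move=> p0 hy; rewrite /lp_norm.
rewrite -(@powR_inv _ p `|y m|) //.
have u0 : forall n, 0 <= `|y n| `^ p by move=> n; exact: powR_ge0.
have H : `|y m| `^ p <= limn (series (fun n => `|y n| `^ p)).
  have := nondecreasing_cvgn_le (@series_nd _ _ u0) hy m.+1.
  apply: le_trans.
  by rewrite seriesSr lerDr; apply: sumr_ge0 => i _.
apply: ge0_ler_powR => //; rewrite ?nnegrE ?invr_ge0 ?powR_ge0 //.
- exact: ltW.
- exact: le_trans H.
Qed.

Definition tail {R : realType} (N : nat) (x : rseq R) : rseq R :=
  fun k => if (N <= k)%N then x k else 0.

Lemma series_tail (R : realType) (p : R) (x : rseq R) N n : 0 < p ->
  series (fun k => `|tail N x k| `^ p) n =
  series (fun k => `|x k| `^ p) (maxn n N) - series (fun k => `|x k| `^ p) N.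
Proof.
move=> p0; elim: n => [|n IH].
  by rewrite max0n subrr /series /= big_geq.
rewrite seriesSr IH /tail; case: (leqP N n) => Nn.
  by rewrite (maxn_idPl (leqW Nn)) seriesSr addrAC.
by rewrite normr0 powR0 ?gt_eqF // addr0 (maxn_idPr Nn).
Qed.

Lemma tail_small (R : realType) (p : R) (x : rseq R) (d : R) : 0 < p ->
  in_lp p x -> 0 < d -> exists N, lp_norm p (tail N x) <= d.
Proof.
move=> p0 hx d0.
have u0 : forall n, 0 <= `|x n| `^ p by move=> n; exact: powR_ge0.
set s := series (fun k => `|x k| `^ p) in hx *.
have cs : s @ \oo --> limn s by [].
have dp : 0 < d `^ p by apply: powR_gt0.
move/cvgrPdist_le: cs => /(_ _ dp) HN.
near \oo => N.
exists N.
have hN : `|limn s - s N| <= d `^ p by near: N.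
have ht : in_lp p (tail N x).
  apply: in_lp_dom hx; first exact: ltW.
  by move=> k; rewrite /tail; case: ifP => // _; rewrite normr0.
have ut0 : forall n, 0 <= `|tail N x n| `^ p by move=> n; exact: powR_ge0.
have L0 : 0 <= limn (series (fun k => `|tail N x k| `^ p)).
  apply: le_trans (nondecreasing_cvgn_le (@series_nd _ _ ut0) ht 0).
  by rewrite /series /= big_geq.
have Lle : limn (series (fun k => `|tail N x k| `^ p)) <= limn s - s N.
  apply: limr_le => //; near=> n.
  rewrite series_tail // lerD2r.
  exact: nondecreasing_cvgn_le (@series_nd _ _ u0) hx _.
rewrite /lp_norm -(@powR_inv _ p d) //; last exact: ltW.
apply: ge0_ler_powR => //; rewrite ?nnegrE ?invr_ge0 ?powR_ge0 //.
  exact: ltW.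
apply: le_trans Lle _; apply: le_trans hN; exact: ler_norm.
Unshelve. all: by end_near. Qed.

Definition zs (R : realType) : rseq R := fun _ => 0.

Lemma in_lp_zs (R : realType) (p : R) : 0 < p -> in_lp p (zs R).
Proof.
move=> p0; apply: (@in_lp_dom _ _ _ (ee R 0)); rewrite ?ltW //; last exact: in_lp_e.
by move=> n; rewrite /zs normr0.
Qed.

Lemma small_eq0 (R : realType) (a : R) : (forall e, 0 < e -> `|a| <= e) -> a = 0.
Proof.
move=> H; apply/eqP; apply/negPn/negP => a0.
have ha : 0 < `|a| by rewrite normr_gt0.
have := H (`|a| / 2); rewrite divr_gt0 // => /(_ isT).
move=> h; lra.
Qed.

Lemma T_zero (R : realType) (p : R) T : 0 < p -> lp_operator p T -> T (zs R) = zs R.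
Proof.
move=> p0 [_ Tl _]; have h0 := in_lp_zs p0.
have := Tl 1 _ _ h0 h0.
have -> : (fun n => 1 * zs R n + zs R n) = zs R by apply/funext => n; rewrite /zs mul1r addr0.
move=> E; apply/funext => n; have := congr1 (fun f => f n) E => /=.
rewrite mul1r /zs => h; lra.
Qed.

Lemma T_scale (R : realType) (p : R) T (c : R) x : 0 < p -> lp_operator p T ->
  in_lp p x -> T (fun n => c * x n) = (fun n => c * T x n).
Proof.
move=> p0 hT hx; have h0 := in_lp_zs p0.
have T0 := T_zero p0 hT; case: hT => _ Tl _.
have := Tl c _ _ hx h0; rewrite T0 /zs.
have -> : (fun n => c * x n + 0) = (fun n => c * x n) by apply/funext => n; rewrite addr0.
move=> ->; apply/funext => n; by rewrite addr0.
Qed.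

Lemma T_add (R : realType) (p : R) T x y : lp_operator p T ->
  in_lp p x -> in_lp p y -> T (fun n => x n + y n) = (fun n => T x n + T y n).
Proof.
move=> [_ Tl _] hx hy; have := Tl 1 _ _ hx hy.
have -> : (fun n => 1 * x n + y n) = (fun n => x n + y n) by apply/funext => n; rewrite mul1r.
move=> ->; apply/funext => n; by rewrite mul1r.
Qed.

Lemma support1 (R : realType) (p : R) T n a b : 0 < p -> lp_operator p T ->
  positive_op p T -> interval_preserving p T ->
  T (ee R n) a != 0 -> T (ee R n) b != 0 -> a = b.
Proof.
move=> p0 hT hpos hip ha hb; apply/eqP/negPn/negP => ab.
have he := in_lp_e (n:=n) p0.
have e0 : seq_nonneg (ee R n) by move=> k; rewrite /ee ler0n.
have v0 := hpos _ he e0.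
set v := T (ee R n) in ha hb v0.
pose y : rseq R := fun k => if k == a then v a else 0.
have : order_interval v y.
  split => k; rewrite /y; case: (k =P a) => [e|_] //.
  by rewrite e.
rewrite -hip // => -[z [z0 zle] Tz].
have zE : z = (fun k => z n * ee R n k).
  apply/funext => k; rewrite /ee; case: eqP => [->|kn]; first by rewrite mulr1.
  rewrite mulr0; apply/le_anti; rewrite z0 andbT.
  by have := zle k; rewrite /ee; move/eqP/negbTE: kn => ->.
move: Tz; rewrite zE (T_scale (z n) p0 hT he) => Tz.
have yb := congr1 (fun f => f b) Tz; have ya := congr1 (fun f => f a) Tz.
move: yb ya; rewrite /y /= eqxx.
have -> : (b == a) = false by apply/negbTE; rewrite eq_sym.
move=> /eqP; rewrite mulf_eq0 (negbTE hb) orbF => /eqP ->.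
by rewrite mul0r => h; move: ha; rewrite -h eqxx.
Qed.

Definition MA (R : realType) (p : R) (A : nat -> Prop) : set (rseq R) :=
  fun x => in_lp p x /\ forall m, ~ A m -> x m = 0.

Definition trunc {R : realType} (N : nat) (x : rseq R) : rseq R :=
  fun k => if (k < N)%N then x k else 0.

Lemma MA_ideal (R : realType) (p : R) A : 0 < p -> lp_ideal p (MA p A).
Proof.
move=> p0; split; first split.
- by move=> x [].
- by split; [exact: in_lp_zs|].
- move=> a x y [hx x0] [hy y0]; split; first exact: in_lp_comb (ltW p0) hx hy.
  by move=> m Am; rewrite x0 // y0 // mulr0 addr0.
- move=> x y xy [hy y0]; split; first exact: in_lp_dom (ltW p0) xy hy.
  move=> m Am; apply/normr0_eq0/le_anti; rewrite normr_ge0 andbT.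
  by have := xy m; rewrite y0 // normr0.
Qed.

Lemma MA_closed (R : realType) (p : R) A : 0 < p -> lp_closed p (MA p A).
Proof.
move=> p0 u x hu hx cv; split => // m Am.
apply: small_eq0 => e e0.
move/cvgrPdist_le: cv => /(_ _ e0) H.
near \oo => k.
have hk : `|0 - lp_norm p (fun n => u k n - x n)| <= e by near: k.
have [huk uk0] := hu k.
have hd : in_lp p (fun n => u k n - x n).
  have := in_lp_comb (a:=-1) (ltW p0) hx huk.
  congr in_lp; apply/funext => n; by rewrite mulN1r addrC.
have := coord_le m p0 hd; rewrite uk0 // sub0r normrN => h.
apply: le_trans h _; apply: le_trans hk.
by rewrite sub0r normrN ler_norm.
Unshelve. all: by end_near. Qed.

Lemma MA_inv (R : realType) (p : R) T A : 0 < p -> lp_operator p T ->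
  (forall n m, A n -> T (ee R n) m != 0 -> A m) -> T_invariant T (MA p A).
Proof.
move=> p0 hT hA x [hx x0]; have hT' := hT; case: hT' => Tlp Tl [C TC].
split; first exact: Tlp.
move=> m Am.
have htr : forall N, in_lp p (trunc N x).
  move=> N; apply: in_lp_dom (ltW p0) _ hx => k; rewrite /trunc.
  by case: ifP => // _; rewrite normr0.
have htl : forall N, in_lp p (tail N x).
  move=> N; apply: in_lp_dom (ltW p0) _ hx => k; rewrite /tail.
  by case: ifP => // _; rewrite normr0.
have Htr : forall N, T (trunc N x) m = 0.
  elim => [|N IH].
    have -> : trunc 0 x = zs R by apply/funext => k.
    by rewrite (T_zero p0 hT).
  have E : trunc N.+1 x = (fun k => x N * ee R N k + trunc N x k).
    apply/funext => k; rewrite /trunc /ee ltnS; case: ltngtP => [kN|Nk|->].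
    - by rewrite mulr0 add0r.
    - by rewrite mulr0 addr0.
    - by rewrite mulr1 addr0.
  rewrite E (Tl _ _ _ (in_lp_e (n:=N) p0) (htr N)) IH addr0.
  case: (pselect (A N)) => AN.
    have -> : T (ee R N) m = 0.
      by apply/eqP; apply/negP => /negP /(hA _ _ AN).
    by rewrite mulr0.
  by rewrite x0 // mul0r.
apply: small_eq0 => e e0.
pose d := e / (`|C| + 1).
have C1 : 0 < `|C| + 1 by apply: ltr_pwDr; rewrite ?normr_ge0.
have d0 : 0 < d by rewrite /d divr_gt0.
have hd : d * (`|C| + 1) = e by rewrite /d mulfVK // gt_eqF.
have [N hN] := tail_small p0 hx d0.
have xE : x = (fun k => trunc N x k + tail N x k).
  apply/funext => k; rewrite /trunc /tail; case: ltnP => _.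
    by rewrite addr0.
  by rewrite add0r.
rewrite xE (T_add hT (htr N) (htl N)) /= Htr add0r.
apply: le_trans (coord_le m p0 (Tlp _ (htl N))) _.
apply: le_trans (TC _ (htl N)) _.
have t0 := lp_norm_ge0 p (tail N x).
have c0 := normr_ge0 C.
apply: (@le_trans _ _ (`|C| * lp_norm p (tail N x))).
  by apply: ler_wpM2r => //; exact: ler_norm.
apply: (@le_trans _ _ (`|C| * d)); first exact: ler_wpM2l.
nra.
Qed.

Unset Implicit Arguments.

Theorem corollary3p7 (R : realType) (p : R) (T : rseq R -> rseq R) :
  1 < p -> lp_operator p T -> positive_op p T -> interval_preserving p T ->
  exists M : set (rseq R),
    [/\ lp_ideal p M, lp_closed p M, T_invariant T M & lp_nontrivial p M].
Proof.
move=> p1 hT hpos hip; have p0 : 0 < p := lt_trans ltr01 p1.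
have hs : forall n, exists s, forall m, T (ee R n) m != 0 -> m = s.
  move=> n; case: (pselect (exists m, T (ee R n) m != 0)) => [[a ha]|hn].
  - by exists a => m hm; exact: support1 p0 hT hpos hip hm ha.
  - by exists 0%N => m hm; exfalso; apply: hn; exists m.
have [sg hsg] := choice hs.
pose A := fun m => exists k, m = iter k.+1 sg 0%N.
have hA : forall n m, A n -> T (ee R n) m != 0 -> A m.
  by move=> n m [k ->] hm; exists k.+1; rewrite (hsg _ _ hm).
exists (MA p A); split.
- exact: MA_ideal.
- exact: MA_closed.
- exact: MA_inv.
- split.
  + exists (ee R (sg 0%N)); split.
    * split; first exact: in_lp_e.
      move=> m Am; rewrite /ee; case: eqP => [em|//].
      by exfalso; apply: Am; exists 0%N; rewrite em.
    * move=> /(congr1 (fun f => f (sg 0%N))); rewrite /ee eqxx => /eqP.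
      by rewrite oner_eq0.
  + have [w Aw] : exists w, ~ A w.
      case: (pselect (A 0%N)) => [[k hk]|A0]; last by exists 0%N.
      have orb : forall i, exists2 j, (j <= k)%N & iter i sg 0%N = iter j sg 0%N.
        elim => [|i [j jk IH]]; first by exists 0%N.
        case: (ltnP j k) => jk'.
          by exists j.+1 => //=; rewrite IH.
        have jE : j = k by apply/eqP; rewrite eqn_leq jk jk'.
        by exists 0%N => //=; rewrite IH jE; exact: esym hk.
      exists (\sum_(j < k.+1) iter j sg 0%N).+1 => -[i hi].
      have [j jk ij] := orb i.+1.
      move: hi; rewrite ij => hi.
      have : (iter j sg 0%N <= \sum_(j0 < k.+1) iter j0 sg 0%N)%N.
        by rewrite (bigD1 (@Ordinal k.+1 j jk)) //= leq_addr.
      by rewrite -hi ltnn.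
    exists (ee R w); split; first exact: in_lp_e.
    move=> [_ h]; have := h w Aw; rewrite /ee eqxx => /eqP.
    by rewrite oner_eq0.
Qed.
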